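(* Let $\Gamma$ be a smooth simple closed curve in $\mathbb R^2$ with arclength parameter $\theta\in[0,\ell)$ and curvature $\kappa(\theta)$, let $M_0>0$ be such that Fermi coordinates $\mathbf y=\gamma(\theta)+t\nu(\theta)$, $|t|<M_0$, are valid, and let $u$ be a (classical) solution of $-\epsilon^2\Delta u+[1+\epsilon^2W(\mathbf y)]u-|u|^2u=0$ in $\mathbb R^2$, written $u=u(t,\theta)$, $W=W(t,\theta)$ in these coordinates. Then for every constant $0<M<M_0$ and every $\theta$, with $\kappa=\kappa(\theta)$: $$\epsilon^2\!\int_{-M}^{M}\!(1+\kappa t)u_t^2\,\mathrm dt+\!\int_{-M}^{M}\!(1+\kappa t)[1+\epsilon^2W]u^2\,\mathrm dt-\!\int_{-M}^{M}\!(1+\kappa t)u^4\,\mathrm dt=\epsilon^2\!\int_{-M}^{M}\!u\,\partial_\theta\Big[\tfrac{\partial_\theta u}{1+\kappa t}\Big]\mathrm dt+\epsilon^2(1+\kappa t)uu_t\Big|_{t=-M}^{M},$$ $$\epsilon^2\!\int_{-M}^{M}\!(1+\kappa t)^2W_tu^2\,\mathrm dt+2\kappa\!\int_{-M}^{M}\!(1+\kappa t)[1+\epsilon^2W]u^2\,\mathrm dt-\kappa\!\int_{-M}^{M}\!(1+\kappa t)u^4\,\mathrm dt$$ $$=-2\epsilon^2\!\int_{-M}^{M}\!(1+\kappa t)u_t\,\partial_\theta\Big[\tfrac{\partial_\theta u}{1+\kappa t}\Big]\mathrm dt-\epsilon^2\big[(1+\kappa t)u_t\big]^2\Big|_{-M}^{M}+(1+\kappa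 t)^2[1+\epsilon^2W]u^2\Big|_{-M}^{M}-\tfrac12(1+\kappa t)^2|u|^4\Big|_{-M}^{M},$$ and consequently $$2\epsilon^2\kappa\!\int_{-M}^{M}\!(1+\kappa t)u_t^2\,\mathrm dt-\epsilon^2\!\int_{-M}^{M}\!(1+\kappa t)^2W_tu^2\,\mathrm dt-\kappa\!\int_{-M}^{M}\!(1+\kappa t)u^4\,\mathrm dt$$ $$=2\epsilon^2\!\int_{-M}^{M}\!\partial_t\big[(1+\kappa t)u\big]\,\partial_\theta\Big[\tfrac{\partial_\theta u}{1+\kappa t}\Big]\mathrm dt+2\epsilon^2\kappa(1+\kappa t)uu_t\Big|_{-M}^{M}+\epsilon^2\big[(1+\kappa t)u_t\big]^2\Big|_{-M}^{M}-(1+\kappa t)^2[1+\epsilon^2W]u^2\Big|_{-M}^{M}+\tfrac12(1+\kappa t)^2|u|^4\Big|_{-M}^{M}.$$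
   Context: $\nu$ is the unit outer normal to $\Gamma$. In Fermi coordinates the Laplacian is $\Delta=\frac{1}{1+\kappa t}\partial_t\big[(1+\kappa t)\partial_t\big]+\frac{1}{1+\kappa t}\partial_\theta\big[\frac{1}{1+\kappa t}\partial_\theta\big]$. *)

(* Defs.v *)
From Stdlib Require Import Reals.
From Coquelicot Require Import Coquelicot.
Open Scope R_scope.

Definition pt (f : R -> R -> R) (t th : R) : R := Derive (fun s => f s th) t.
Definition pth (f : R -> R -> R) (t th : R) : R := Derive (fun s => f t s) th.

Definition C1_strip (M0 : R) (f : R -> R -> R) : Prop :=
  forall t th, Rabs t < M0 ->
    ex_derive (fun s => f s th) t /\ ex_derive (fun s => f t s) th /\
    continuous (fun p : R * R => f (fst p) (snd p)) (t, th) /\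
    continuous (fun p : R * R => pt f (fst p) (snd p)) (t, th) /\
    continuous (fun p : R * R => pth f (fst p) (snd p)) (t, th).

Definition C2_strip (M0 : R) (f : R -> R -> R) : Prop :=
  C1_strip M0 f /\ C1_strip M0 (pt f) /\ C1_strip M0 (pth f).

(* Boundary evaluation  F |_{t=a}^{b} = F b - F a. *)
Definition evalb (F : R -> R) (a b : R) : R := F b - F a.

(* Laplacian in Fermi coordinates:
   Δu = 1/(1+κt) ∂_t[(1+κt) ∂_t u] + 1/(1+κt) ∂_θ[ ∂_θ u / (1+κt) ]. *)
Definition fermi_lap (kappa : R -> R) (u : R -> R -> R) (t th : R) : R :=
  / (1 + kappa th * t) * pt (fun s x => (1 + kappa x * s) * pt u s x) t th
  + / (1 + kappa th * t) * pth (fun s x => pth u s x / (1 + kappa x * s)) t th.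

(* Main.v *)
Require Import Defs.
From Stdlib Require Import Reals Lra.
From Coquelicot Require Import Coquelicot.
Open Scope R_scope.

Lemma cR_plus (f g : R -> R) x : continuous f x -> continuous g x -> continuous (fun y => f y + g y) x.
Proof. intros; apply (continuous_plus f g); auto. Qed.
Lemma cR_minus (f g : R -> R) x : continuous f x -> continuous g x -> continuous (fun y => f y - g y) x.
Proof. intros; apply (continuous_minus f g); auto. Qed.
Lemma cR_mult (f g : R -> R) x : continuous f x -> continuous g x -> continuous (fun y => f y * g y) x.
Proof. intros; apply (continuous_mult f g); auto. Qed.
Lemma cR_opp (f : R -> R) x : continuous f x -> continuous (fun y => - f y) x.
Proof. intros; apply (continuous_opp f); auto. Qed.
Lemma cR_const (c : R) x : continuous (fun _ : R => c) x.
Proof. apply continuous_const. Qed.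
Lemma cR_id x : continuous (fun y : R => y) x.
Proof. apply continuous_id. Qed.
Lemma cR_pow (f : R -> R) n x : continuous f x -> continuous (fun y => f y ^ n) x.
Proof.
  intros H; induction n as [|n IH]; simpl.
  - apply cR_const.
  - apply cR_mult; auto.
Qed.

Lemma slice (f : R -> R -> R) t th :
  continuous (fun p : R * R => f (fst p) (snd p)) (t, th) -> continuous (fun s => f s th) t.
Proof.
  intros H. apply (continuous_comp_2 (fun s => s) (fun _ => th) f t).
  - apply continuous_id.
  - apply continuous_const.
  - exact H.
Qed.

Lemma isP (f g : R -> R) a b If Ig : is_RInt f a b If -> is_RInt g a b Ig ->
  is_RInt (fun y => f y + g y) a b (If + Ig).
Proof. intros; exact (is_RInt_plus f g a b If Ig H H0). Qed.
Lemma isM (f g : R -> R) a b If Ig : is_RInt f a b If -> is_RInt g a b Ig ->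
  is_RInt (fun y => f y - g y) a b (If - Ig).
Proof. intros; exact (is_RInt_minus f g a b If Ig H H0). Qed.
Lemma isS (f : R -> R) a b c If : is_RInt f a b If ->
  is_RInt (fun y => c * f y) a b (c * If).
Proof. intros; exact (is_RInt_scal f a b c If H). Qed.
Lemma isR (f : R -> R) a b : ex_RInt f a b -> is_RInt f a b (RInt f a b).
Proof. intros; exact (RInt_correct f a b H). Qed.
Lemma is_RInt_eq (f g : R -> R) a b l1 l2 :
  (forall x, Rmin a b < x < Rmax a b -> f x = g x) ->
  is_RInt f a b l1 -> is_RInt g a b l2 -> l1 = l2.
Proof.
  intros He H1 H2. apply (is_RInt_ext f g a b l1 He) in H1.
  rewrite <- (is_RInt_unique g a b l1 H1). exact (is_RInt_unique g a b l2 H2).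
Qed.
Lemma isD (F dF : R -> R) a b :
  (forall x, Rmin a b <= x <= Rmax a b -> is_derive F x (dF x)) ->
  (forall x, Rmin a b <= x <= Rmax a b -> continuous dF x) ->
  is_RInt dF a b (F b - F a).
Proof. intros; exact (is_RInt_derive F dF a b H H0). Qed.

Lemma exRc (f : R -> R) a b :
  (forall z, Rmin a b <= z <= Rmax a b -> continuous f z) -> ex_RInt f a b.
Proof. intros H; exact (ex_RInt_continuous (V:=R_CompleteNormedModule) f a b H). Qed.
Lemma exRext (f g : R -> R) a b :
  (forall x, Rmin a b < x < Rmax a b -> f x = g x) -> ex_RInt f a b -> ex_RInt g a b.
Proof. intros; exact (ex_RInt_ext (V:=R_NormedModule) f g a b H H0). Qed.

Lemma isU (f : R -> R) a b l : is_RInt f a b l -> RInt f a b = l.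
Proof. intros; exact (is_RInt_unique f a b l H). Qed.
Lemma isExt (f g : R -> R) a b l :
  (forall x, Rmin a b < x < Rmax a b -> f x = g x) -> is_RInt f a b l -> is_RInt g a b l.
Proof. intros; exact (is_RInt_ext f g a b l H H0). Qed.

Lemma abs4 x : Rabs x ^ 4 = x ^ 4.
Proof.
  replace 4%nat with (2 * 2)%nat by reflexivity.
  rewrite !pow_mult, pow2_abs. reflexivity.
Qed.

Theorem lemma4p1 (kappa : R -> R) (M0 eps : R) (u W : R -> R -> R)
  (hM0 : 0 < M0)
  (heps : 0 < eps)
  (hkappa : forall th, ex_derive kappa th /\ continuous (Derive kappa) th)
  (hfermi : forall t th, Rabs t < M0 -> 0 < 1 + kappa th * t)
  (hu : C2_strip M0 u)
  (hW : C1_strip M0 W)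
  (hpde : forall t th, Rabs t < M0 ->
     - eps ^ 2 * fermi_lap kappa u t th + (1 + eps ^ 2 * W t th) * u t th
     - (Rabs (u t th)) ^ 2 * u t th = 0) :
  forall (M th : R), 0 < M -> M < M0 ->
  let k := kappa th in
  let Q := fun t => pth (fun s x => pth u s x / (1 + kappa x * s)) t th in
  (eps ^ 2 * RInt (fun t => (1 + k * t) * (pt u t th) ^ 2) (- M) M
   + RInt (fun t => (1 + k * t) * (1 + eps ^ 2 * W t th) * (u t th) ^ 2) (- M) M
   - RInt (fun t => (1 + k * t) * (u t th) ^ 4) (- M) M
   = eps ^ 2 * RInt (fun t => u t th * Q t) (- M) M
     + eps ^ 2 * evalb (fun t => (1 + k * t) * u t th * pt u t th) (- M) M)
  /\
  (eps ^ 2 * RInt (fun t => (1 + k * t) ^ 2 * pt W t th * (u t th) ^ 2) (- M) M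
   + 2 * k * RInt (fun t => (1 + k * t) * (1 + eps ^ 2 * W t th) * (u t th) ^ 2) (- M) M
   - k * RInt (fun t => (1 + k * t) * (u t th) ^ 4) (- M) M
   = - 2 * eps ^ 2 * RInt (fun t => (1 + k * t) * pt u t th * Q t) (- M) M
     - eps ^ 2 * evalb (fun t => ((1 + k * t) * pt u t th) ^ 2) (- M) M
     + evalb (fun t => (1 + k * t) ^ 2 * (1 + eps ^ 2 * W t th) * (u t th) ^ 2) (- M) M
     - / 2 * evalb (fun t => (1 + k * t) ^ 2 * (Rabs (u t th)) ^ 4) (- M) M)
  /\
  (2 * eps ^ 2 * k * RInt (fun t => (1 + k * t) * (pt u t th) ^ 2) (- M) M
   - eps ^ 2 * RInt (fun t => (1 + k * t) ^ 2 * pt W t th * (u t th) ^ 2) (- M) M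
   - k * RInt (fun t => (1 + k * t) * (u t th) ^ 4) (- M) M
   = 2 * eps ^ 2 * RInt (fun t => pt (fun s x => (1 + kappa x * s) * u s x) t th * Q t) (- M) M
     + 2 * eps ^ 2 * k * evalb (fun t => (1 + k * t) * u t th * pt u t th) (- M) M
     + eps ^ 2 * evalb (fun t => ((1 + k * t) * pt u t th) ^ 2) (- M) M
     - evalb (fun t => (1 + k * t) ^ 2 * (1 + eps ^ 2 * W t th) * (u t th) ^ 2) (- M) M
     + / 2 * evalb (fun t => (1 + k * t) ^ 2 * (Rabs (u t th)) ^ 4) (- M) M).
Proof.
  intros M th HM HM0 k Q.
  destruct hu as [hu0 [hu1 _]].
  assert (Hcl : forall x, Rmin (-M) M <= x <= Rmax (-M) M -> Rabs x < M0).
  { intros x Hx. rewrite Rmin_left in Hx by lra. rewrite Rmax_right in Hx by lra.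
    unfold Rabs; destruct (Rcase_abs x); lra. }
  assert (Hop : forall x, Rmin (-M) M < x < Rmax (-M) M -> Rabs x < M0).
  { intros x Hx. apply Hcl. lra. }
  assert (Hc0 : forall x, Rabs x < M0 -> continuous (fun t => u t th) x).
  { intros x Hx. apply slice. apply (hu0 x th Hx). }
  assert (Hc1 : forall x, Rabs x < M0 -> continuous (fun t => pt u t th) x).
  { intros x Hx. apply slice. apply (hu0 x th Hx). }
  assert (Hc2 : forall x, Rabs x < M0 -> continuous (fun t => pt (pt u) t th) x).
  { intros x Hx. apply slice. apply (hu1 x th Hx). }
  assert (HcW0 : forall x, Rabs x < M0 -> continuous (fun t => W t th) x).
  { intros x Hx. apply slice. apply (hW x th Hx). }
  assert (HcW1 : forall x, Rabs x < M0 -> continuous (fun t => pt W t th) x).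
  { intros x Hx. apply slice. apply (hW x th Hx). }
  assert (He0 : forall x, Rabs x < M0 -> ex_derive (fun t => u t th) x).
  { intros x Hx. apply (hu0 x th Hx). }
  assert (He1 : forall x, Rabs x < M0 -> ex_derive (fun t => pt u t th) x).
  { intros x Hx. apply (hu1 x th Hx). }
  assert (HeW : forall x, Rabs x < M0 -> ex_derive (fun t => W t th) x).
  { intros x Hx. apply (hW x th Hx). }
  Ltac cont Hx := repeat first [ apply cR_const | apply cR_id
     | match goal with H : forall x, Rabs x < _ -> continuous _ x |- _ => apply (H _ Hx) end
     | apply cR_plus | apply cR_minus | apply cR_mult | apply cR_opp | apply cR_pow ].
  assert (HA : forall x, Rabs x < M0 ->
    pt (fun s x => (1 + kappa x * s) * pt u s x) x th = k * pt u x th + (1 + k * x) * pt (pt u) x th).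
  { intros x Hx. unfold pt at 1. apply is_derive_unique. auto_derive.
    - apply He1; exact Hx.
    - change (Derive (fun x0 => pt u x0 th) x) with (pt (pt u) x th). unfold k. ring. }
  assert (HP : forall x, Rabs x < M0 ->
    pt (fun s x => (1 + kappa x * s) * u s x) x th = k * u x th + (1 + k * x) * pt u x th).
  { intros x Hx. unfold pt at 1. apply is_derive_unique. auto_derive.
    - apply He0; exact Hx.
    - change (Derive (fun x0 => u x0 th) x) with (pt u x th). unfold k. ring. }
  assert (HQ : forall x, Rabs x < M0 ->
    Q x = (1 + k * x) * ((1 + eps ^ 2 * W x th) * u x th - u x th ^ 3) * / eps ^ 2
          - (k * pt u x th + (1 + k * x) * pt (pt u) x th)).
  { intros x Hx. pose proof (hpde x th Hx) as Hp. pose proof (hfermi x th Hx) as Hf.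
    unfold fermi_lap in Hp. rewrite HA in Hp by exact Hx. rewrite pow2_abs in Hp.
    change (pth (fun s x0 => pth u s x0 / (1 + kappa x0 * s)) x th) with (Q x) in Hp.
    fold k in Hp, Hf.
    set (c := 1 + k * x) in *. set (A := k * pt u x th + c * pt (pt u) x th) in *.
    assert (E : eps ^ 2 * (A + Q x) = c * ((1 + eps ^ 2 * W x th) * u x th - u x th ^ 3)).
    { replace (eps ^ 2 * (A + Q x)) with (c * (eps ^ 2 * (/ c * A + / c * Q x))) by (field; lra).
      f_equal. simpl in Hp |- *. lra. }
    rewrite <- E. field. lra. }
  pose (Qe := fun x => (1 + k * x) * ((1 + eps ^ 2 * W x th) * u x th - u x th ^ 3) * / eps ^ 2
          - (k * pt u x th + (1 + k * x) * pt (pt u) x th)).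
  assert (HQe : forall x, Rmin (-M) M <= x <= Rmax (-M) M -> continuous Qe x).
  { intros x Hx. pose proof (Hcl x Hx) as Hx'. unfold Qe. cont Hx'. }
  Ltac excont Hcl := apply exRc; intros z Hz; pose proof (Hcl z Hz) as Hz'; cont Hz'.
  assert (E1 : ex_RInt (fun t => (1 + k * t) * (pt u t th) ^ 2) (- M) M) by excont Hcl.
  assert (E2 : ex_RInt (fun t => (1 + k * t) * (1 + eps ^ 2 * W t th) * (u t th) ^ 2) (- M) M) by excont Hcl.
  assert (E3 : ex_RInt (fun t => (1 + k * t) * (u t th) ^ 4) (- M) M) by excont Hcl.
  assert (E5 : ex_RInt (fun t => (1 + k * t) ^ 2 * pt W t th * (u t th) ^ 2) (- M) M) by excont Hcl.
  assert (E4 : ex_RInt (fun t => u t th * Q t) (- M) M).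
  { apply (exRext (fun t => u t th * Qe t)).
    - intros x Hx. rewrite (HQ x (Hop x Hx)). reflexivity.
    - apply exRc; intros z Hz. pose proof (Hcl z Hz) as Hz'.
      apply cR_mult; [cont Hz' | apply HQe; exact Hz]. }
  assert (E6 : ex_RInt (fun t => (1 + k * t) * pt u t th * Q t) (- M) M).
  { apply (exRext (fun t => (1 + k * t) * pt u t th * Qe t)).
    - intros x Hx. rewrite (HQ x (Hop x Hx)). reflexivity.
    - apply exRc; intros z Hz. pose proof (Hcl z Hz) as Hz'.
      apply cR_mult; [cont Hz' | apply HQe; exact Hz]. }
  Ltac dtac He0 He1 HeW Hcl Hx :=
    auto_derive; [ repeat split; try (first [apply He0 | apply He1 | apply HeW]; apply Hcl; exact Hx) | ].
  assert (D1 : is_RInt (fun t => k * u t th * pt u t th + (1 + k * t) * pt u t th ^ 2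
                 + (1 + k * t) * u t th * pt (pt u) t th) (- M) M
      ((fun t => (1 + k * t) * u t th * pt u t th) M - (fun t => (1 + k * t) * u t th * pt u t th) (- M))).
  { apply (isD (fun t => (1 + k * t) * u t th * pt u t th)).
    - intros x Hx. dtac He0 He1 HeW Hcl Hx.
      try change (Derive (fun x0 => u x0 th) x) with (pt u x th);
      try change (Derive (fun x0 => pt u x0 th) x) with (pt (pt u) x th);
      try change (Derive (fun x0 => W x0 th) x) with (pt W x th). unfold k. ring.
    - intros z Hz; pose proof (Hcl z Hz) as Hz'; cont Hz'. }
  pose (G := fun t => - (eps ^ 2 / 2) * ((1 + k * t) * pt u t th) ^ 2
     + / 2 * ((1 + k * t) ^ 2 * (1 + eps ^ 2 * W t th) * u t th ^ 2)
     - / 4 * ((1 + k * t) ^ 2 * u t th ^ 4)).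
  assert (D2 : is_RInt (fun t => - eps ^ 2 * (1 + k * t) * pt u t th * (k * pt u t th + (1 + k * t) * pt (pt u) t th)
      + / 2 * (2 * k * (1 + k * t) * (1 + eps ^ 2 * W t th) * u t th ^ 2
               + (1 + k * t) ^ 2 * eps ^ 2 * pt W t th * u t th ^ 2
               + (1 + k * t) ^ 2 * (1 + eps ^ 2 * W t th) * 2 * u t th * pt u t th)
      - / 4 * (2 * k * (1 + k * t) * u t th ^ 4 + (1 + k * t) ^ 2 * 4 * u t th ^ 3 * pt u t th))
      (- M) M (G M - G (- M))).
  { apply (isD G).
    - intros x Hx. unfold G. dtac He0 He1 HeW Hcl Hx.
      try change (Derive (fun x0 => u x0 th) x) with (pt u x th);
      try change (Derive (fun x0 => pt u x0 th) x) with (pt (pt u) x th);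
      try change (Derive (fun x0 => W x0 th) x) with (pt W x th). unfold k. field.
    - intros z Hz; pose proof (Hcl z Hz) as Hz'; cont Hz'. }
  assert (I7 : RInt (fun t => pt (fun s x => (1 + kappa x * s) * u s x) t th * Q t) (- M) M
     = k * RInt (fun t => u t th * Q t) (- M) M + RInt (fun t => (1 + k * t) * pt u t th * Q t) (- M) M).
  { apply isU. eapply isExt; [| exact (isP _ _ _ _ _ _ (isS _ _ _ k _ (isR _ _ _ E4)) (isR _ _ _ E6))].
    intros x Hx. cbv beta. rewrite (HP x (Hop x Hx)). ring. }
  assert (Id1 : eps ^ 2 * RInt (fun t => (1 + k * t) * (pt u t th) ^ 2) (- M) M
   + RInt (fun t => (1 + k * t) * (1 + eps ^ 2 * W t th) * (u t th) ^ 2) (- M) M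
   - RInt (fun t => (1 + k * t) * (u t th) ^ 4) (- M) M
   - eps ^ 2 * RInt (fun t => u t th * Q t) (- M) M
   = eps ^ 2 * ((fun t => (1 + k * t) * u t th * pt u t th) M - (fun t => (1 + k * t) * u t th * pt u t th) (- M))).
  { eapply is_RInt_eq; [| exact (isM _ _ _ _ _ _ (isM _ _ _ _ _ _ (isP _ _ _ _ _ _ (isS _ _ _ (eps ^ 2) _ (isR _ _ _ E1)) (isR _ _ _ E2)) (isR _ _ _ E3)) (isS _ _ _ (eps ^ 2) _ (isR _ _ _ E4))) | exact (isS _ _ _ (eps ^ 2) _ D1)].
    intros x Hx. cbv beta. rewrite (HQ x (Hop x Hx)). field. lra. }
  assert (Id2 : eps ^ 2 * RInt (fun t => (1 + k * t) ^ 2 * pt W t th * (u t th) ^ 2) (- M) M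
   + 2 * k * RInt (fun t => (1 + k * t) * (1 + eps ^ 2 * W t th) * (u t th) ^ 2) (- M) M
   - k * RInt (fun t => (1 + k * t) * (u t th) ^ 4) (- M) M
   + 2 * eps ^ 2 * RInt (fun t => (1 + k * t) * pt u t th * Q t) (- M) M
   = 2 * (G M - G (- M))).
  { eapply is_RInt_eq; [| exact (isP _ _ _ _ _ _ (isM _ _ _ _ _ _ (isP _ _ _ _ _ _ (isS _ _ _ (eps ^ 2) _ (isR _ _ _ E5)) (isS _ _ _ (2 * k) _ (isR _ _ _ E2))) (isS _ _ _ k _ (isR _ _ _ E3))) (isS _ _ _ (2 * eps ^ 2) _ (isR _ _ _ E6))) | exact (isS _ _ _ 2 _ D2)].
    intros x Hx. cbv beta. rewrite (HQ x (Hop x Hx)). field. lra. }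
  unfold G in Id2. unfold evalb. cbv beta in *. rewrite !abs4.
  rewrite I7. split; [| split]; nra.
Qed.
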